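(* In the $N$-customer elementary Indian Buffet Game, assume homogeneity: $u_i(q,n)=u(q,n)$ for all customers $i$, all $q\in Q$ and all $n$, where $u(q,n)$ is non-increasing in $n$ for each $q$. Let $d^*=(d_1^*,\dots,d_N^* )$ be the equilibrium path generated by the strategies $\sigma$, i.e. $n_1=0$, $d_i^*=\sigma_i(n_i)$, $n_{i+1}=n_i+d_i^*$, and let $n^*=\sum_{k=1}^N d_k^*$. Then $d_i^*=1$ if and only if $1\le i\le n^*$.
   Context: Elementary Indian Buffet Game: a single dish whose unknown state $\theta$ lies in a finite set $\Theta$; the quality $q$ lies in a finite set $Q$ with probability mass function $f(q\mid\theta)$ given $\theta$; common belief $p=\{p(\theta)\}_{\theta\in\Theta}$. Customers $1,\dots,N$ decide sequentially whether to request the dish; customer $i$ observes $n_i=\sum_{k<i}d_k$. With utility $u_i(q,n)$ define $\bar U_i(n)=\sum_{\theta\in\Theta}\sum_{q\in Q}u_i(q,n)f(q\mid\theta)p(\theta)$. Recursive procedure $A(n,i)$ returning $(d,m)$: if $i=N$, return $d=1$ if $\bar U_N(n+1)>0$ and $d=0$ otherwise, with $m=0$. If $i<N$: let $(d',m')=A(n+1,i+1)$ and $m=m'+d'$; if $\bar U_i(n+m+1)>0$ return $(1,m)$; otherwise let $(d'',m'')=A(n,i+1)$ and return $(0,m''+d'')$. Define $\sigma_i(n)$ as the first component of $A(n,i)$. *)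

(* Defs.v *)
From HB Require Import structures.
From mathcomp Require Import all_boot all_order all_algebra.
Set Implicit Arguments. Unset Strict Implicit. Unset Printing Implicit Defensive.
Import Order.TTheory GRing.Theory Num.Theory.
Local Open Scope ring_scope.

(* Expected utility of customer i when the total number of requesters is n:
   Ubar_i(n) = sum_theta sum_q u_i(q,n) f(q|theta) p(theta).
   u i q n : utility of customer i (customers numbered 1..N),
   f q th  : f(q | theta),  p th : p(theta). *)
Definition Ubar (R : realFieldType) (Theta Q : finType)
  (u : nat -> Q -> nat -> R) (f : Q -> Theta -> R) (p : Theta -> R)
  (i n : nat) : R :=
  \sum_(th : Theta) \sum_(q : Q) u i q n * f q th * p th.

(* The recursive procedure A(n,i); k is the fuel N - i.
   Returns (d, m) with d a boolean decision (true = request). *)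
Fixpoint Aaux (R : realFieldType) (Ub : nat -> nat -> R) (k n i : nat)
  : bool * nat :=
  match k with
  | 0 => (0 < Ub i n.+1, 0%N)
  | k'.+1 =>
      let: (d', m') := Aaux Ub k' n.+1 i.+1 in
      let m := (m' + d')%N in
      if 0 < Ub i (n + m).+1 then (true, m)
      else let: (d'', m'') := Aaux Ub k' n i.+1 in (false, (m'' + d'')%N)
  end.

Definition A (R : realFieldType) (Ub : nat -> nat -> R) (N n i : nat)
  : bool * nat := Aaux Ub (N - i) n i.

Definition sigma (R : realFieldType) (Ub : nat -> nat -> R) (N i n : nat)
  : nat := nat_of_bool (A Ub N n i).1.

(* nbefore i = number of requests among customers 1..i on the equilibrium
   path; so n_i = nbefore (i-1), and n_1 = nbefore 0 = 0. *)
Fixpoint nbefore (R : realFieldType) (Ub : nat -> nat -> R) (N i : nat)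
  : nat :=
  match i with
  | 0 => 0%N
  | i'.+1 => (nbefore Ub N i' + sigma Ub N i (nbefore Ub N i'))%N
  end.

Definition dstar (R : realFieldType) (Ub : nat -> nat -> R) (N i : nat)
  : nat := sigma Ub N i (nbefore Ub N i.-1).

(* Main.v *)
Require Import Defs.
From HB Require Import structures.
From mathcomp Require Import all_boot all_order all_algebra.
Import Order.TTheory GRing.Theory Num.Theory.
Local Open Scope ring_scope.

Fixpoint cnt (P : nat -> bool) (k a : nat) : nat :=
  match k with 0 => 0%N | k'.+1 => (P a + cnt P k' a.+1)%N end.

Section S.
Variable P : nat -> bool.
Hypothesis hP : forall m n, (m <= n)%N -> P n -> P m.

Lemma cnt0 k b : ~~ P b -> cnt P k b = 0%N.
Proof.
elim: k b => [|k IH] b Hb //=.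
rewrite (negbTE Hb) IH //; apply/negP => H; move/negP: Hb; apply; exact: hP H.
Qed.

Lemma cntP k a : P (a + cnt P k a.+1)%N = P a.
Proof.
elim: k a => [|k IH] a /=; first by rewrite addn0.
case H: (P a.+1).
  by rewrite add1n addnS -addSn IH H; symmetry; apply: hP H.
rewrite add0n cnt0 ?addn0 //.
apply/negP => H3; have := hP _ _ (leqnSn a.+1) H3; by rewrite H.
Qed.

Lemma Aaux_eq (R : realFieldType) (Ub : nat -> nat -> R) :
  (forall i n, (0 < Ub i n) = P n) ->
  forall k n i, Aaux Ub k n i = (P n.+1, cnt P k n.+2).
Proof.
move=> HU; elim=> [|k IH] n i /=; first by rewrite HU.
rewrite IH HU [(cnt _ _ _ + _)%N]addnC.
have -> : (n + (P n.+2 + cnt P k n.+3)).+1 = (n.+1 + cnt P k.+1 n.+2)%N.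
  by rewrite /= addSn.
rewrite cntP.
case H: (P n.+1) => //.
have NP2 : ~~ P n.+2 by apply/negP => H2; have := hP _ _ (leqnSn n.+1) H2; rewrite H.
have NP3 : ~~ P n.+3 by apply/negP => H3; have := hP _ _ (ltnW (leqnSn n.+2)) H3; rewrite H.
by rewrite IH H (negbTE NP2) !cnt0.
Qed.
End S.

Theorem lemma1 (R : realFieldType) (Theta Q : finType)
  (f : Q -> Theta -> R) (p : Theta -> R)
  (u : nat -> Q -> nat -> R) (uh : Q -> nat -> R) (N : nat) :
  (forall q th, 0 <= f q th) ->
  (forall th, \sum_(q : Q) f q th = 1) ->
  (forall th, 0 <= p th) ->
  \sum_(th : Theta) p th = 1 ->
  (forall i q n, u i q n = uh q n) ->
  (forall q n m, (n <= m)%N -> uh q m <= uh q n) ->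
  let Ub := Ubar u f p in
  let nstar := nbefore Ub N N in
  forall i : nat, (1 <= i <= N)%N ->
    (dstar Ub N i = 1%N <-> (i <= nstar)%N).
Proof.
move=> hf _ hp _ hu hmono Ub nstar.
pose g n := \sum_(th : Theta) \sum_(q : Q) uh q n * f q th * p th.
pose P n := 0 < g n.
have HU : forall i n, (0 < Ub i n) = P n.
  by move=> i n; rewrite /Ub /Ubar /P /g; under eq_bigr do under eq_bigr do rewrite hu.
have hP : forall m n, (m <= n)%N -> P n -> P m.
  move=> m n mn; rewrite /P => H; apply: (lt_le_trans H).
  apply: ler_sum => th _; apply: ler_sum => q _.
  by apply: ler_wpM2r => //; apply: ler_wpM2r => //; apply: hmono.
have Hs : forall i n, sigma Ub N i n = P n.+1.
  by move=> i n; rewrite /sigma /A (@Aaux_eq P hP _ _ HU).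
pose s := nbefore Ub N.
have sS : forall j, s j.+1 = (s j + P (s j).+1)%N.
  by move=> j; rewrite /s /= Hs.
have inv : forall j, s j = j \/ ~~ P (s j).+1.
  elim=> [|j IH]; first by left.
  rewrite sS; case: IH => [E|NP].
    rewrite E; case H: (P j.+1); first by left; rewrite addn1.
    by right; rewrite addn0 H.
  by right; rewrite (negbTE NP) addn0.
have mono : forall a b, (a <= b)%N -> (s a <= s b)%N.
  move=> a b /subnK <-; elim: (b - a)%N => [|c IH] //.
  by rewrite addSn sS (leq_trans IH) // leq_addr.
have stuck : forall a b, (a <= b)%N -> ~~ P (s a).+1 -> s b = s a.
  move=> a b /subnK <- NP; elim: (b - a)%N => [|c IH] //.
  by rewrite addSn sS IH (negbTE NP) addn0.
move=> i /andP [i1 iN].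
rewrite /dstar Hs /nstar -/s.
case: i i1 iN => // i _ iN /=.
split.
  case H: (P (s i).+1) => // _.
  case: (inv i) => [E|]; last by rewrite H.
  apply: (leq_trans _ (mono _ _ iN)); by rewrite sS H E addn1.
move=> Hi; case H: (P (s i).+1) => //; exfalso.
have E := stuck i N (ltnW iN) (negbT H).
have : (s i <= i)%N.
  by case: (inv i) => [->|NP] //; elim: (i) => [|j IH] //; rewrite sS; case: (P _); rewrite ?addn1 ?addn0 //; apply: leq_trans IH _.
by rewrite -E => /(leq_trans Hi); rewrite ltnn.
Qed.
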